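(* Let $Z$ be a reflection positive volume-dependent field theory, let $\Sigma$ be a nonempty closed $(n-1)$-manifold, and for each $\lambda\in\mathrm{Spec}(H_\Sigma)$ let $g_\lambda:\mathcal H^\lambda_\Sigma\to\mathbb C$ be linear. If $g=\sum_{\lambda\in\mathrm{Spec}(H_\Sigma)}g_\lambda\circ\pi_\lambda$ defines a continuous map $\check E_\Sigma\to\mathbb C$, then for all $t>0$ there exists $C>0$ such that $\|g_\lambda\|<Ce^{t\lambda}$ for all $\lambda\in\mathrm{Spec}(H_\Sigma)$.
   Context: A reflection positive volume-dependent field theory $Z$ (a nuclear, holomorphic, coherent symmetric monoidal functor from $n$-dimensional bordisms of germs equipped with complex densities of positive real part to nuclear pairs — continuous injective dense maps from nuclear dual Fréchet to nuclear Fréchet spaces — which is equivariant for reflection/conjugation and sends reflection-fixed objects to Hermitian nuclear pairs) assigns to each closed $(n-1)$-manifold $\Sigma$ (using a fixed translation-invariant density $\nu_\Sigma\wedge dt$ on $\Sigma\times\mathbb R$, $\nu_\Sigma$ positive of volume 1) a Hilbert space $\mathcal H_\Sigma$ and a self-adjoint operator $H_\Sigma$ with discrete spectrum bounded below and finite-dimensional eigenspaces $\mathcal H_\Sigma^\lambda$, such that cylinders $\Sigma\times I$ of complex volume $s$ act by $\exp(-sH_\Sigma)$. The Hermitian nuclear pair assigned to $\Sigma$ is $\check E_\Sigma\subset\mathcal H_\Sigma\subset\hat E_\Sigma$ with $\check E_\Sigma=\{(v_\lambda)\in\prod_{\lambda}\mathcal H^\lambda_\Sigma:\exists\tau\in\mathbb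 C_{>0},\ (e^{\tau\lambda}v_\lambda)\in\mathcal H_\Sigma\}$, carrying the colimit topology of copies of $\mathcal H_\Sigma$ under the maps $e^{-\tau H_\Sigma}$. $\pi_\lambda:\mathcal H_\Sigma\to\mathcal H^\lambda_\Sigma$ is the orthogonal projection (extended componentwise to families). *)

(* Defs.v *)
From HB Require Import structures.
From mathcomp Require Import all_boot all_order all_algebra.
From mathcomp Require Import all_classical all_reals all_analysis.
From mathcomp Require Import complex.
Set Implicit Arguments. Unset Strict Implicit. Unset Printing Implicit Defensive.
Import Order.TTheory GRing.Theory Num.Theory.
Local Open Scope classical_set_scope.
Local Open Scope ring_scope.

Section SpectralData.
Variable R : realType.

Definition cabs (z : R[i]) : R := Num.sqrt (complex.Re z ^+ 2 + complex.Im z ^+ 2).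

Definition cexp (z : R[i]) : R[i] :=
  (Complex (expR (complex.Re z)) 0) * Complex (cos (complex.Im z)) (sin (complex.Im z)).

(* squared Hermitian norm on C^d (the eigenspace H^lambda, identified
   isometrically with C^d, d its dimension) *)
Definition vnorm2 (d : nat) (v : 'cV[R[i]]_d) : R :=
  \sum_(j < d) cabs (v j ord0) ^+ 2.
Definition vnorm (d : nat) (v : 'cV[R[i]]_d) : R := Num.sqrt (vnorm2 v).

Definition opnorm (d : nat) (f : 'cV[R[i]]_d -> R[i]) : R :=
  sup [set cabs (f v) | v in [set v : 'cV[R[i]]_d | vnorm v <= 1]].

Variables (I : choiceType) (lam : I -> R) (d : I -> nat).

Definition fam := forall i : I, 'cV[R[i]]_(d i).

Definition hnorm2 (v : fam) : \bar R := \esum_(i in [set: I]) ((vnorm2 (v i))%:E).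

(* the Hilbert space H_Sigma = completed direct sum of the eigenspaces *)
Definition inH (v : fam) : Prop := (hnorm2 v < +oo)%E.

Definition hsub (v w : fam) : fam := fun i => v i - w i.

Definition H_open (U : set fam) : Prop :=
  U `<=` inH /\
  forall v, U v -> exists2 e : R, 0 < e &
    forall w, inH w -> (hnorm2 (hsub w v) < (e ^+ 2)%:E)%E -> U w.

Definition expH (s : R[i]) (v : fam) : fam :=
  fun i => cexp (- (s * Complex (lam i) 0)) *: v i.

Definition inEc (v : fam) : Prop :=
  exists2 tau : R[i], 0 < complex.Re tau &
    inH (fun i => cexp (tau * Complex (lam i) 0) *: v i).

(* open subsets of check E_Sigma for the colimit (final) topology of the
   maps exp(-tau H_Sigma) : H_Sigma -> check E_Sigma, Re tau > 0 *)
Definition Ec_open (U : set fam) : Prop :=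
  U `<=` inEc /\
  forall tau : R[i], 0 < complex.Re tau ->
    H_open [set v | inH v /\ U (expH tau v)].

Definition C_open (V : set R[i]) : Prop :=
  forall z, V z -> exists2 e : R, 0 < e & forall w, cabs (w - z) < e -> V w.

Definition Ec_continuous (G : fam -> R[i]) : Prop :=
  forall V, C_open V -> Ec_open [set v | inEc v /\ V (G v)].

Definition psum (g : forall i : I, 'cV[R[i]]_(d i) -> R[i]) (v : fam) (c : R) : R[i] :=
  \sum_(i \in [set i | lam i <= c]) g i (v i).

End SpectralData.

(* Main.v *)
Set Warnings "-all".
Require Import Defs.
From HB Require Import structures.
From mathcomp Require Import all_boot all_order all_algebra.
From mathcomp Require Import all_classical all_reals all_analysis.
From mathcomp Require Import complex.
From mathcomp.algebra_tactics Require Import ring lra.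
Import Order.TTheory GRing.Theory Num.Theory.
Local Open Scope classical_set_scope.
Local Open Scope ring_scope.

Set Implicit Arguments.
Section Helpers.
Local Open Scope complex_scope.
Context {R : realType}.
Implicit Types a b z : R[i].

Lemma cabsE z : (cabs z)%:C = `|z|.
Proof. by rewrite normc_def. Qed.

Lemma cabs_ge0 z : 0 <= cabs z.
Proof. exact: sqrtr_ge0. Qed.

Lemma cabs_eq0 z : cabs z = 0 -> z = 0.
Proof. by move=> h; apply/normr0_eq0; rewrite -cabsE h. Qed.

Lemma cabsM a b : cabs (a * b) = cabs a * cabs b.
Proof. by apply: complexI; rewrite rmorphM /= !cabsE normrM. Qed.

Lemma cabsD a b : cabs (a + b) <= cabs a + cabs b.
Proof. by rewrite -lecR rmorphD /= !cabsE ler_normD. Qed.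

Lemma cabs_real (r : R) : cabs r%:C = `|r|.
Proof. by rewrite /cabs /= expr0n /= addr0 sqrtr_sqr. Qed.

Lemma cexp_real (x : R) : cexp x%:C = (expR x)%:C.
Proof.
rewrite /cexp /= cos0 sin0; apply/eqP; rewrite eq_complex /=.
by rewrite !mulr0 mulr1 subr0 mul0r addr0 !eqxx.
Qed.

Lemma cabs_lim a b : (forall e : R, 0 < e -> cabs (a - b) < e) -> a = b.
Proof.
move=> h; apply/eqP; rewrite -subr_eq0; apply/eqP/cabs_eq0.
have [//|hp] := eqVneq (cabs (a - b)) 0.
have p : 0 < cabs (a - b) by rewrite lt0r hp cabs_ge0.
by have := h _ p; rewrite ltxx.
Qed.

End Helpers.

Section Single.
Local Open Scope complex_scope.
Context {R : realType} {I : choiceType} {d : I -> nat}.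

Definition sgl (i : I) (u : 'cV[R[i]]_(d i)) : fam R d :=
  fun j => match i =P j with
           | ReflectT e => eq_rect i (fun k => 'cV[R[i]]_(d k)) u j e
           | ReflectF _ => 0 end.
Arguments sgl : clear implicits.

Lemma sgl_at i u : sgl i u i = u.
Proof. by rewrite /sgl; case: eqP => // e; rewrite (eq_irrelevance e erefl). Qed.

Lemma sgl_off i u j : j != i -> sgl i u j = 0.
Proof. by move=> ji; rewrite /sgl; case: eqP => // e; exfalso; move/eqP: ji; apply; rewrite e. Qed.

Lemma vnorm2_ge0 n (v : 'cV[R[i]]_n) : 0 <= vnorm2 v.
Proof. by apply: sumr_ge0 => j _; apply: sqr_ge0. Qed.

Lemma vnorm2_scale n (k : R) (v : 'cV[R[i]]_n) : vnorm2 (k%:C *: v) = k ^+ 2 * vnorm2 v.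
Proof.
rewrite /vnorm2 mulr_sumr; apply: eq_bigr => j _.
by rewrite mxE cabsM cabs_real exprMn real_normK ?num_real.
Qed.

Lemma vnorm2_0 n : vnorm2 (0 : 'cV[R[i]]_n) = 0.
Proof. by rewrite -(scale0r 0) -[0 *: _]/((0%:C) *: _) vnorm2_scale expr0n mul0r. Qed.

Lemma hnorm2_sgl i u : hnorm2 (sgl i u) = (vnorm2 u)%:E.
Proof.
rewrite /hnorm2; transitivity (\esum_(j in [set i]) (vnorm2 (sgl i u j))%:E); last first.
  by rewrite esum_set1 ?sgl_at // lee_fin vnorm2_ge0.
rewrite [RHS]esum_mkcond; apply: eq_esum => j _.
case: ifPn; first by [].
rewrite notin_setE /= => ji; rewrite sgl_off; last by apply/eqP.
by rewrite vnorm2_0.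
Qed.
End Single.

Unset Implicit Arguments.
Lemma psum_single (R : realType) (I : choiceType) (lam : I -> R) (d : I -> nat)
  (g : forall i : I, 'cV[R[i]]_(d i) -> R[i]) (v : fam R d) (i : I) (c : R) :
  (forall j, j != i -> g j (v j) = 0) -> lam i <= c ->
  psum lam g v c = g i (v i).
Proof.
move=> h lc; rewrite /psum -(fsbig_widen [set i]) ?fsbig_set1 //.
  by move=> j /= ->.
move=> j [/= _ ji]; apply: h; apply/eqP => e; exact: ji.
Qed.

Theorem lemma3p41 (R : realType) (I : choiceType) (lam : I -> R) (d : I -> nat)
  (lam_inj : injective lam)
  (d_pos : forall i, (0 < d i)%N)
  (spec_discrete : forall c : R, finite_set [set i | lam i <= c])
  (g : forall i : I, 'cV[R[i]]_(d i) -> R[i])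
  (g_lin : forall i (a : R[i]) (u v : 'cV[R[i]]_(d i)),
      g i (a *: u + v) = a * g i u + g i v)
  (G : fam R d -> R[i])
  (G_sum : forall v : fam R d, inEc lam v ->
      forall e : R, 0 < e -> exists c0 : R, forall c : R, c0 <= c ->
        cabs (psum lam g v c - G v) < e)
  (G_cont : Ec_continuous lam G) :
  forall t : R, 0 < t -> exists2 C : R, 0 < C &
    forall i : I, opnorm (g i) < C * expR (t * lam i).
Proof.
move=> t t0.
have g0 j : g j 0 = 0.
  have := g_lin j 1 0 0; rewrite scaler0 addr0 mul1r => h.
  by apply/esym/(@addrI _ (g j 0)); rewrite addr0 {1}h.
have gZ j a u : g j (a *: u) = a * g j u.
  by rewrite -[a *: u]addr0 g_lin g0 addr0.
pose zf : fam R d := fun j => 0.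
have zH : inH zf.
  by rewrite /inH /hnorm2 esum1 ?ltry // => j _; rewrite vnorm2_0.
have zEc : inEc lam zf.
  exists 1; first by rewrite /= ltr01.
  have -> : (fun i => cexp (1 * (lam i)%:C%C) *: zf i) = zf.
    by apply: functional_extensionality_dep => j; rewrite scaler0.
  exact: zH.
have Gz : G zf = 0.
  apply/esym/cabs_lim => e e0.
  have [c0 Hc] := G_sum zf zEc e e0.
  have := Hc c0 (lexx _).
  by rewrite /psum fsbig1 // => j _; rewrite g0.
have cabs0 : cabs (0 : R[i]) = 0 by rewrite /cabs /= expr0n /= addr0 sqrtr0.
pose V := [set z : R[i] | cabs (z - G zf) < 1].
have CV : C_open V.
  move=> z Vz; exists (1 - cabs (z - G zf)); first by rewrite subr_gt0.
  move=> w hw; rewrite /V /=.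
  have -> : w - G zf = (w - z) + (z - G zf) by rewrite addrA subrK.
  have := cabsD (w - z) (z - G zf); lra.
have [_ HU] := G_cont _ CV.
have [_ Hop] := HU (t%:C)%C t0.
have expH0 : expH lam (t%:C)%C zf = zf.
  by apply: functional_extensionality_dep => j; rewrite /expH scaler0.
have H0 : [set v | inH v /\ [set v | inEc lam v /\ V (G v)] (expH lam (t%:C)%C v)] zf.
  by rewrite /= expH0; split => //; split => //; rewrite /V /= subrr cabs0.
have [e e0 He] := Hop zf H0.
exists (4 / e); first by rewrite divr_gt0.
move=> i.
set E := expR (t * lam i).
have E0 : 0 < E by apply: expR_gt0.
apply: (@le_lt_trans _ _ (2 / e * E)); last first.
  by rewrite ltr_pM2r // ltr_pM2r ?invr_gt0 // ltr_nat.
apply: ge_sup.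
  exists (cabs (g i 0)); exists 0 => //.
  by rewrite /= /vnorm vnorm2_0 sqrtr0.
move=> _ [v hv <-].
have v21 : vnorm2 v <= 1.
  rewrite -(@sqr_sqrtr _ (vnorm2 v)) ?vnorm2_ge0 //.
  by apply: exprn_ile1 => //; apply: sqrtr_ge0.
set w := sgl i (((e / 2)%:C)%C *: v).
have wH : hnorm2 w = ((e / 2) ^+ 2 * vnorm2 v)%:E.
  by rewrite /w hnorm2_sgl vnorm2_scale.
have inHw : inH w by rewrite /inH wH ltry.
have hs : hsub w zf = w.
  by apply: functional_extensionality_dep => j; rewrite /hsub subr0.
have hlt : (hnorm2 (hsub w zf) < (e ^+ 2)%:E)%E.
  rewrite hs wH lte_fin.
  have := vnorm2_ge0 v; nra.
have [_ [hEc hV]] := He w inHw hlt.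
have Gw : G (expH lam (t%:C)%C w) = g i (expH lam (t%:C)%C w i).
  apply/esym/cabs_lim => e' e'0.
  have [c0 Hc] := G_sum _ hEc e' e'0.
  have hm : c0 <= Num.max c0 (lam i) by rewrite le_max lexx.
  have := Hc _ hm.
  rewrite (psum_single _ _ _ _ _ _ i); last by rewrite le_max lexx orbT.
    by [].
  move=> j ji; rewrite /expH /w sgl_off // scaler0; exact: g0.
move: hV; rewrite /V /= Gw Gz subr0 /expH /w sgl_at !gZ.
have e2 : 0 <= e / 2 by rewrite divr_ge0 // ltW.
rewrite -rmorphM -rmorphN cexp_real !cabsM !cabs_real !ger0_norm ?expR_ge0 //.
rewrite expRN -/E => hV.
set X := cabs (g i v) in hV *.
have -> : X = (E^-1 * (e / 2 * X)) * (2 / e * E).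
  by field; apply/andP; split; apply: lt0r_neq0.
apply: ler_piMl; last exact: ltW.
by rewrite mulr_ge0 ?divr_ge0 ?ltW.
Qed.
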